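(* Let $1\leq l\leq p$ and set the truncation level $K:=n^{\frac lp}M$. Then \[ \left|\mathbb{E}[\underline{Z}-Z]\right|\leq\frac{M}{n^{l(1-\frac1p)}} \] and $\underline{\sigma}\leq\sigma$.
   Context: Let $n,N$ be positive integers and $\mathcal{Z}_1,\dots,\mathcal{Z}_n$ probability spaces; all random variables live on the product space with the product measure. For $1\leq i\leq n$, $1\leq j\leq N$ let $Z_i(j):\mathcal{Z}_i\to\mathbb{R}$ be random variables, $Z:=\max_{1\leq j\leq N}\left|\frac1n\sum_{i=1}^nZ_i(j)\right|$. Let $\mathcal{E}_i:\mathcal{Z}_i\to\mathbb{R}$ satisfy $|Z_i(j)|\leq\mathcal{E}_i$ for all $i,j$, and assume there are $p\in[1,\infty)$ and $M>0$ with $\mathbb{E}\mathcal{E}_i^p\leq M^p$ for all $i$. Let $\sigma:=\sqrt{\max_{j}\frac1n\sum_{i=1}^n\mathbb{E}Z_i(j)^2}$. For a truncation level $K>0$ define $\underline{Z}_i(j):=Z_i(j)\mathbf{1}_{\{\mathcal{E}_i\leq K\}}$, $\underline{Z}:=\max_{1\leq j\leq N}\left|\frac1n\sum_{i=1}^n\underline{Z}_i(j)\right|$ and $\underline{\sigma}:=\sqrt{\max_{1\leq j\leq N}\frac1n\sum_{i=1}^n\operatorname{Var}\underline{Z}_i(j)}$. *)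

(* Defs.v *)
From HB Require Import structures.
From mathcomp Require Import all_boot all_order all_algebra.
From mathcomp Require Import all_classical all_reals all_analysis.
Set Implicit Arguments. Unset Strict Implicit. Unset Printing Implicit Defensive.
Import Order.TTheory GRing.Theory Num.Theory.
Local Open Scope classical_set_scope.
Local Open Scope ring_scope.

Definition mutually_independent {d} {T : measurableType d} {R : realType}
  (P : probability T R) (n : nat) (dZ : 'I_n -> measure_display)
  (Zs : forall i, measurableType (dZ i)) (X : forall i, T -> Zs i) : Prop :=
  forall A : forall i, set (Zs i), (forall i, measurable (A i)) ->
    P [set t | forall i, A i (X i t)] = (\prod_(i < n) P (X i @^-1` A i))%E.

Definition Zmax {T : Type} {R : realType} (n N : nat) (W : 'I_n -> 'I_N -> T -> R)
  : T -> R :=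
  fun t => \big[Num.max/0]_(j < N) `| n%:R^-1 * \sum_(i < n) W i j t |.

Definition trunc {T : Type} {R : realType} (W E : T -> R) (K : R) : T -> R :=
  fun t => W t * ((E t <= K)%R : bool)%:R.

(* Main.v *)
Require Import Defs.
From HB Require Import structures.
From mathcomp Require Import all_boot all_order all_algebra.
From mathcomp Require Import all_classical all_reals all_analysis.
From mathcomp Require Import measurable_realfun.
From mathcomp Require Import ring lra.
Import Order.TTheory GRing.Theory Num.Theory.
Local Open Scope classical_set_scope.
Local Open Scope ring_scope.

Lemma mbool (R : realType) : measurable_fun [set: bool] (fun b : bool => (b%:R : R)).
Proof. by move=> _ B _; rewrite /measurable /=. Qed.

Lemma bigmax_abs_diff (R : realType) N (a b : 'I_N -> R) (c : R) :
  (forall j, `|a j - b j| <= c) -> 0 <= c ->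
  `|\big[Num.max/0]_(j < N) `|a j| - \big[Num.max/0]_(j < N) `|b j| | <= c.
Proof.
have ge0 : forall f : 'I_N -> R, 0 <= \big[Num.max/0]_(j < N) `|f j|.
  by move=> f; elim/big_ind: _ => // x y x0 y0; rewrite le_max x0.
have h1 : forall a b : 'I_N -> R, (forall j, `|a j - b j| <= c) -> 0 <= c ->
    \big[Num.max/0]_(j < N) `|a j| <= \big[Num.max/0]_(j < N) `|b j| + c.
  move=> a' b' h c0; apply: bigmax_le => [|j _]; first by rewrite addr_ge0.
  rewrite -[a' j](subrK (b' j)); apply: le_trans (ler_normD _ _) _.
  rewrite addrC; apply: lerD; first exact: le_bigmax.
  exact: h.
move=> h c0; have := h1 a b h c0.
have := h1 b a (fun j => ltac:(by rewrite distrC; exact: h j)) c0.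
rewrite ler_norml; move=> H1 H2; apply/andP; split; lra.
Qed.

Lemma mbigmax d (T : measurableType d) (R : realType) (I : Type) (s : seq I) (f : I -> T -> R) :
  (forall i, measurable_fun setT (f i)) ->
  measurable_fun setT (fun t => \big[Num.max/0]_(i <- s) f i t).
Proof.
move=> mf; elim: s => [|a s IH].
  under eq_fun do rewrite big_nil. exact: measurable_cst.
under eq_fun do rewrite big_cons. exact: (measurable_maxr (mf a) IH).
Qed.
Theorem lemma5p2 (R : realType) (d : measure_display) (T : measurableType d)
  (P : probability T R) (n N : nat)
  (dZ : 'I_n -> measure_display) (Zs : forall i, measurableType (dZ i))
  (X : forall i, T -> Zs i)
  (z : forall i : 'I_n, 'I_N -> Zs i -> R) (e : forall i : 'I_n, Zs i -> R)
  (p M l : R) :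
  (0 < n)%N -> (0 < N)%N ->
  (forall i, measurable_fun setT (X i)) ->
  mutually_independent P X ->
  (forall i j, measurable_fun setT (z i j)) ->
  (forall i, measurable_fun setT (e i)) ->
  (forall i j x, `| z i j x | <= e i x) ->
  1 <= p -> 0 < M ->
  (forall i, ('E_P[(fun t => e i (X i t) `^ p)%R] <= (M `^ p)%:E)%E) ->
  1 <= l -> l <= p ->
  let K := n%:R `^ (l / p) * M in
  let Zij := fun i j t => z i j (X i t) in
  let Zt := fun i j => trunc (Zij i j) (fun t => e i (X i t)) K in
  let sigma := sqrte (\big[Order.max/0%E]_(j < N)
                  ((n%:R^-1)%:E * \sum_(i < n) 'E_P[(fun t => Zij i j t ^+ 2)%R]))%E in
  let sigma_t := sqrte (\big[Order.max/0%E]_(j < N)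
                  ((n%:R^-1)%:E * \sum_(i < n) 'V_P[Zt i j]))%E in
  (`| 'E_P[(Zmax Zt \- Zmax Zij)%R] | <= (M / n%:R `^ (l * (1 - p^-1)))%:E)%E
  /\ (sigma_t <= sigma)%E.
Proof.
move=> n0 N0 mX indep mz me hze p1 M0 hM l1 lp K Zij Zt sigma sigma_t.
have e0 : forall i x, 0 <= e i x.
  by move=> i x; exact: le_trans (normr_ge0 _) (hze i (Ordinal N0) x).
have mZ : forall i j, measurable_fun setT (Zij i j).
  by move=> i j; exact: measurableT_comp (mz i j) (mX i).
have mE : forall i, measurable_fun setT (fun t => e i (X i t)).
  by move=> i; exact: measurableT_comp (me i) (mX i).
have mZt : forall i j, measurable_fun setT (Zt i j).
  move=> i j; rewrite /Zt /trunc; apply: measurable_funM; first exact: mZ.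
  apply: measurableT_comp (mbool R) _.
  exact: measurable_fun_ler (mE i) (measurable_cst K).
have K0 : 0 < K by rewrite /K mulr_gt0 // powR_gt0 // ltr0n.
have hZt : forall i j t, `|Zt i j t| <= K.
  move=> i j t; rewrite /Zt /trunc; have [h|h] := leP (e i (X i t)) K => /=.
    by rewrite mulr1; exact: le_trans (hze _ _ _) h.
  by rewrite mulr0 normr0 ltW.
split; last first.
  rewrite /sigma_t /sigma lee_sqrt; last first.
    elim/big_ind: _ => //.
      by move=> x y x0 y0; rewrite le_max x0.
    move=> j _; rewrite mule_ge0 // ?lee_fin ?invr_ge0 //.
    by apply: sume_ge0 => i _; apply: expectation_ge0 => t; exact: sqr_ge0.
  apply: le_bigmax2 => j _.
  apply: lee_wpmul2l; first by rewrite lee_fin invr_ge0.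
  apply: lee_sum => i _.
  have LZt : Zt i j \in Lfun P 2%:E.
    rewrite inE; apply/andP; split; first by rewrite inE; exact: mZt.
    rewrite inE /finite_norm unlock /=.
    apply: poweR_lty.
    apply: (@le_lt_trans _ _ (\int[P]_x (K `^ 2)%:E)%E).
      apply: ge0_le_integral => //.
      - apply/measurable_EFinP; apply: measurableT_comp (@measurable_powR R 2) _.
        exact: measurableT_comp (mZt i j).
      - by move=> t _; rewrite lee_fin ge0_ler_powR // ?nnegrE // ltW.
    by rewrite integral_cst //= probability_setT mule1 ltry.
  rewrite varianceE //.
  apply: (@le_trans _ _ ('E_P[Zt i j ^+ 2] - 0)%E).
    by apply: leeB => //; exact: sqre_ge0.
  rewrite sube0.
  have sqE : forall x, (Zt i j ^+ 2) x = Zt i j x ^+ 2 by move=> x; rewrite !expr2.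
  apply: expectation_le => //.
  - by rewrite expr2; exact: measurable_funM.
  - exact: measurable_funX.
  - by move=> x; rewrite sqE sqr_ge0.
  - by move=> x; rewrite sqr_ge0.
  apply: aeW => x; rewrite sqE /Zt /trunc exprMn; case: (e i (X i x) <= K) => /=.
    by rewrite expr1n mulr1.
  by rewrite expr0n mulr0 sqr_ge0.
pose c := (K `^ (p - 1))^-1.
have c0 : 0 <= c by rewrite /c invr_ge0 powR_ge0.
pose g := fun i t => e i (X i t) `^ p.
pose B := fun t => n%:R^-1 * \sum_(i < n) c * g i t.
have mg : forall i, measurable_fun setT (g i).
  by move=> i; exact: measurableT_comp (@measurable_powR R p) (mE i).
have powS : forall x, 0 < x -> x `^ p = x * x `^ (p - 1).
  move=> x x0; rewrite -{2}(powRr1 (ltW x0)) -powRD; first by rewrite addrCA subrr addr0.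
  by apply/implyP => _; rewrite gt_eqF.
have tail : forall i j t, `|Zt i j t - Zij i j t| <= c * g i t.
  move=> i j t; rewrite /Zt /trunc /c /g.
  have [h|h] := leP (e i (X i t)) K => /=.
    by rewrite mulr1 subrr normr0 mulr_ge0 // ?invr_ge0 ?powR_ge0.
  rewrite mulr0 sub0r normrN.
  apply: le_trans (hze i j (X i t)) _.
  set x := e i (X i t) in h *.
  have x0 : 0 < x by exact: lt_trans K0 h.
  have Kp : 0 < K `^ (p - 1) by rewrite powR_gt0.
  rewrite mulrC ler_pdivlMr // powS //.
  apply: ler_wpM2l; first exact: ltW.
  apply: ge0_ler_powR; rewrite ?nnegrE ?subr_ge0 //; exact: ltW.
have key : forall t, `|Zmax Zt t - Zmax Zij t| <= B t.
  move=> t; rewrite /Zmax; apply: bigmax_abs_diff; last first.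
    by rewrite /B mulr_ge0 ?invr_ge0 // sumr_ge0 // => i _; rewrite mulr_ge0 // powR_ge0.
  move=> j; rewrite -mulrBr -sumrB normrM ger0_norm ?invr_ge0 //.
  apply: ler_wpM2l; first by rewrite invr_ge0.
  apply: le_trans (ler_norm_sum _ _ _) _.
  by apply: ler_sum => i _; exact: tail.
have mZmax : forall W : 'I_n -> 'I_N -> T -> R, (forall i j, measurable_fun setT (W i j)) ->
    measurable_fun setT (Zmax W).
  move=> W mW; rewrite /Zmax; apply: mbigmax => j.
  apply: measurableT_comp (@normr_measurable R _) _.
  apply: measurable_funM; first exact: measurable_cst.
  by apply: measurable_sum => i; exact: mW.
rewrite (_ : 'E_P[_] = \int[P]_x ((Zmax Zt \- Zmax Zij) x)%:E)%E; last by rewrite unlock.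
apply: le_trans (le_abse_integral _ _ _) _ => //.
  by apply/measurable_EFinP; apply: measurable_funB; apply: mZmax.
apply: (@le_trans _ _ (\int[P]_x (B x)%:E)%E).
  apply: ge0_le_integral => //.
  - apply/measurable_EFinP; apply: measurableT_comp (@normr_measurable R _) _.
    by apply: measurable_funB; apply: mZmax.
  - apply/measurable_EFinP; apply: measurable_funM; first exact: measurable_cst.
    apply: measurable_sum => i; apply: measurable_funM; first exact: measurable_cst.
    exact: mg.
  - by move=> t _; rewrite lee_fin key.
rewrite /B.
under eq_integral do rewrite EFinM.
rewrite ge0_integralZl_EFin; last 4 first.
- by [].
- by move=> t _; rewrite lee_fin sumr_ge0 // => i _; rewrite mulr_ge0 // powR_ge0.
- apply/measurable_EFinP; apply: measurable_sum => i; apply: measurable_funM; first exact: measurable_cst.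
  exact: mg.
- by rewrite invr_ge0.
under eq_integral do rewrite -sumEFin.
rewrite ge0_integral_sum //; last 2 first.
- move=> i; apply/measurable_EFinP; apply: measurable_funM; first exact: measurable_cst.
  exact: mg.
- by move=> i t _; rewrite lee_fin mulr_ge0 // powR_ge0.
apply: (@le_trans _ _ ((n%:R^-1)%:E * \sum_(i < n) (c * M `^ p)%:E)%E).
  apply: lee_wpmul2l; first by rewrite lee_fin invr_ge0.
  apply: lee_sum => i _.
  under eq_integral do rewrite EFinM.
  rewrite ge0_integralZl_EFin //; last 2 first.
  - by move=> t _; rewrite lee_fin powR_ge0.
  - exact/measurable_EFinP.
  rewrite EFinM; apply: lee_wpmul2l; first by rewrite lee_fin.
  by have := hM i; rewrite unlock.
rewrite sumEFin -EFinM lee_fin sumr_const card_ord.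
have n0' : (n%:R : R) != 0 by rewrite pnatr_eq0 -lt0n.

rewrite -(mulr_natr (c * M `^ p) n) mulrCA mulVf // mulr1.
have p0 : p != 0 by rewrite gt_eqF // (lt_le_trans ltr01).
have hMp : M `^ p = M * M `^ (p - 1).
  rewrite -{2}(powRr1 (ltW M0)) -powRD; first by rewrite addrCA subrr addr0.
  by apply/implyP => _; rewrite gt_eqF.
have hex : l / p * (p - 1) = l * (1 - p^-1) by field.
rewrite /c /K powRM ?powR_ge0 ?(ltW M0) // -powRrM hex hMp.
have M1 : M `^ (p - 1) != 0 by rewrite gt_eqF // powR_gt0.
have N1 : n%:R `^ (l * (1 - p^-1)) != 0 by rewrite gt_eqF // powR_gt0 // ltr0n.
set A := n%:R `^ (l * (1 - p^-1)) in N1 *; set C := M `^ (p - 1) in M1 *.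
have -> : (A * C)^-1 * (M * C) = M / A.
  rewrite invfM (mulrC M C) mulrA -(mulrA A^-1) mulVf // mulr1 mulrC //.
exact: lexx.
Qed.
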